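(* Let $\mathcal A\subseteq E^\infty$, let $V\subseteq E$ be a block subspace, $\vec v$ a finite block sequence and $T$ a $(V,\vec v)$-rule, and suppose that for every block subspace $W\subseteq V$, player I has no strategy in $B^T_W(\vec v)$ to play in $\mathcal A$. Then there are a block subspace $X\subseteq V$ and an $(X,\vec v)$-rule $S\subseteq T$ such that $[S]\cap{\rm Int}(\mathcal A)=\emptyset$ and, for every block subspace $W\subseteq X$, player I has no strategy in $B^S_W(\vec v)$ to play in $\mathcal A$.
   Context: Fix a countable field $\mathfrak F$ and let $E$ be the countable-dimensional $\mathfrak F$-vector space with basis $(e_n)$. For non-zero $x=\sum a_ne_n$, ${\rm supp}\,x=\{n:a_n\neq0\}$. A block sequence is a sequence of non-zero vectors with $\max{\rm supp}\,x_n<\min{\rm supp}\,x_{n+1}$. ''Subspace'' means an infinite-dimensional block subspace of $E$. For a subspace $X$, $X[k]=\{x\in X\setminus\{0\}:k<\min{\rm supp}\,x\}$. $E^\infty=E^{\mathbb N}$ with the product of discrete topologies; ${\rm Int}$ denotes interior; $E^{<\infty}$ is the set of finite block sequences; $\hat{}$ is concatenation; $T_{\vec x}=\{\vec y:\vec x\,\hat{}\,\vec y\in T\}$; $[T]=\{(x_n)\in E^\infty:\text{for infinitely many } m,\ (x_0,\dots,x_m)\in T\}$. Game $B_V(\vec v)$: if $|\vec v|$ is even: II plays a subspace $Z_0\subseteq V$; I plays non-zero $x_0\in Z_0$ and $n_0\in\mathbb N$; II plays non-zero $y_0\in V[n_0]$ and a subspace $Z_1\subseteq V$; I plays $x_1\in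 Z_1$, $n_1$; II plays $y_1\in V[n_1]$, $Z_2$; etc.; outcome $\vec v\,\hat{}\,(x_0,y_0,x_1,y_1,\dots)$. If $|\vec v|$ is odd: I plays $n_0$; II plays $y_0\in V[n_0]$ and $Z_0\subseteq V$; I plays $x_0\in Z_0$ and $n_1$; II plays $y_1\in V[n_1]$ and $Z_1$; etc.; outcome $\vec v\,\hat{}\,(y_0,x_0,y_1,x_1,\dots)$. A $(V,\vec v)$-rule is a set $T\subseteq E^{<\infty}$ with $\vec v\in T$ such that: (i) if $\vec y\in T$, $|\vec y|$ odd, then for every subspace $Z\subseteq V$ there is $z\in Z$ with $\vec y\,\hat{}\,z\in T$; (ii) if $\vec y\in T$, $|\vec y|$ even, then there is $n$ with $\vec y\,\hat{}\,z\in T$ for all $z\in V[n]$. The $T$-induced subgame $B^T_V(\vec v)$ is played as $B_V(\vec v)$ with the additional requirement that every position, i.e. the finite sequence of vectors played so far listed in the order they appear in the outcome, belongs to $T_{\vec v}$. A strategy to play in $\mathcal A$ is one all of whose outcomes lie in $\mathcal A$. *)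

(* Defs.v *)
From HB Require Import structures.
From mathcomp Require Import all_boot all_order all_algebra.
Set Implicit Arguments. Unset Strict Implicit. Unset Printing Implicit Defensive.
Import Order.TTheory GRing.Theory Num.Theory.
Local Open Scope ring_scope.

(* The countable-dimensional F-vector space E with basis (e_n) is modelled
   as {poly F}: e_n = 'X^n, and the coordinate a_n of x is x`_n. *)
Section Defs.
Variable F : countFieldType.
Local Notation E := {poly F}.

Definition supp_before (x y : E) : Prop :=
  forall i j : nat, x`_i != 0 -> y`_j != 0 -> (i < j)%N.

Definition block_seq (z : nat -> E) : Prop :=
  forall n : nat, z n != 0 /\ supp_before (z n) (z n.+1).

Definition block_fin (s : seq E) : Prop :=
  (forall k : nat, (k < size s)%N -> nth 0 s k != 0) /\
  (forall k : nat, (k.+1 < size s)%N -> supp_before (nth 0 s k) (nth 0 s k.+1)).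

Definition block_subspace (X : E -> Prop) : Prop :=
  exists z : nat -> E, block_seq z /\
    forall x : E, X x <-> exists (n : nat) (c : nat -> F), x = \sum_(i < n) c i *: z i.

Definition subset_of (X Y : E -> Prop) : Prop := forall x, X x -> Y x.

Definition tail_of (X : E -> Prop) (k : nat) (x : E) : Prop :=
  X x /\ x != 0 /\ forall i : nat, x`_i != 0 -> (k < i)%N.

Definition is_rule (V : E -> Prop) (v : seq E) (T : seq E -> Prop) : Prop :=
  T v /\
  (forall y, T y -> block_fin y) /\
  (forall y, T y -> odd (size y) ->
     forall Z, block_subspace Z -> subset_of Z V -> exists z, Z z /\ T (rcons y z)) /\
  (forall y, T y -> ~~ odd (size y) ->
     exists n : nat, forall z, tail_of V n z -> T (rcons y z)).

Definition body (T : seq E -> Prop) (x : nat -> E) : Prop :=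
  forall k : nat, exists m : nat, (k <= m)%N /\ T (mkseq x m.+1).

(* interior of A in the product of discrete topologies *)
Definition interior (A : (nat -> E) -> Prop) (x : nat -> E) : Prop :=
  exists m : nat, forall y : nat -> E, (forall i, (i < m)%N -> y i = x i) -> A y.

Definition outcome (v : seq E) (u : nat -> E) : nat -> E :=
  fun j => if (j < size v)%N then nth 0 v j else u (j - size v)%N.

Definition interleave (a b : nat -> E) : nat -> E :=
  fun j => if odd j then b j./2 else a j./2.

(* ---- The game B^T_W(v), |v| even ----
   II plays Z_0; then I plays (x_i, n_i); II plays (y_i, Z_{i+1}); ...
   A strategy for I maps Z_0 and the list [(y_0,Z_1);...;(y_{i-1},Z_i)]
   of II's later moves to I's i-th move (x_i, n_i). *)
Definition stratI_even := (E -> Prop) -> seq (E * (E -> Prop)) -> E * nat.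

Definition wins_even (A : (nat -> E) -> Prop) (T : seq E -> Prop)
    (W : E -> Prop) (v : seq E) (sigma : stratI_even) : Prop :=
  forall (Z : nat -> (E -> Prop)) (y : nat -> E),
  let mv := fun i : nat => sigma (Z 0%N) [seq (y j, Z j.+1) | j <- iota 0 i] in
  let x := fun i => (mv i).1 in
  let n := fun i => (mv i).2 in
  let u := interleave x y in
  let legZ := fun i => block_subspace (Z i) /\ subset_of (Z i) W in
  let legY := fun i => tail_of W (n i) (y i) /\ T (v ++ mkseq u (i.*2.+2)) in
  let legX := fun i => Z i (x i) /\ x i != 0 /\ T (v ++ mkseq u (i.*2.+1)) in
  (* sigma only makes legal moves against legal play of II *)
  (forall k : nat, (forall i, (i <= k)%N -> legZ i) ->
                   (forall i, (i < k)%N -> legY i) -> legX k) /\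
  ((forall i, legZ i /\ legY i) -> A (outcome v u)).

(* ---- The game B^T_W(v), |v| odd ----
   I plays n_0; II plays (y_0, Z_0); I plays (x_0, n_1); II plays (y_1, Z_1);
   ...  A strategy for I is n_0 together with a map sending
   [(y_0,Z_0);...;(y_i,Z_i)] to (x_i, n_{i+1}). *)
Definition stratI_odd := (nat * (seq (E * (E -> Prop)) -> E * nat))%type.

Definition wins_odd (A : (nat -> E) -> Prop) (T : seq E -> Prop)
    (W : E -> Prop) (v : seq E) (sigma : stratI_odd) : Prop :=
  forall (Z : nat -> (E -> Prop)) (y : nat -> E),
  let mv := fun i : nat => sigma.2 [seq (y j, Z j) | j <- iota 0 i.+1] in
  let x := fun i => (mv i).1 in
  let n := fun i => match i with 0%N => sigma.1 | i'.+1 => (mv i').2 end in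
  let u := interleave y x in
  let legII := fun i => tail_of W (n i) (y i) /\ T (v ++ mkseq u (i.*2.+1)) /\
                        block_subspace (Z i) /\ subset_of (Z i) W in
  let legI := fun i => Z i (x i) /\ x i != 0 /\ T (v ++ mkseq u (i.*2.+2)) in
  (forall k : nat, (forall i, (i <= k)%N -> legII i) -> legI k) /\
  ((forall i, legII i) -> A (outcome v u)).

Definition I_has_strategy (A : (nat -> E) -> Prop) (T : seq E -> Prop)
    (W : E -> Prop) (v : seq E) : Prop :=
  if odd (size v) then exists sigma : stratI_odd, wins_odd A T W v sigma
  else exists sigma : stratI_even, wins_even A T W v sigma.

End Defs.

(* Main.v *)
Require Import Defs.
From HB Require Import structures.
From mathcomp Require Import all_boot all_order all_algebra.
From Stdlib Require Import ClassicalEpsilon FunctionalExtensionality.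
Set Implicit Arguments. Unset Strict Implicit. Unset Printing Implicit Defensive.
Import GRing.Theory.
Local Open Scope ring_scope.

Definition beyond {F : countFieldType} (N : nat) (x : {poly F}) : Prop :=
  forall i : nat, x`_i != 0 -> (N < i)%N.
Definition cW {F : countFieldType} (Z : {poly F} -> Prop) (N : nat) (x : {poly F}) : Prop :=
  Z x /\ beyond N x.

Lemma supp_lt_size {F : countFieldType} (x : {poly F}) i : x`_i != 0 -> (i < size x)%N.
Proof. apply: contraR; rewrite -leqNgt => H; by rewrite nth_default. Qed.

Lemma nz_supp {F : countFieldType} (x : {poly F}) : x != 0 -> x`_(size x).-1 != 0.
Proof. by rewrite -lead_coefE lead_coef_eq0. Qed.

Lemma block_trans {F : countFieldType} (z : nat -> {poly F}) :
  block_seq z -> forall i k, (i < k)%N -> supp_before (z i) (z k).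
Proof.
move=> Hz i k; elim: k => // k IH; rewrite ltnS leq_eqVlt => /orP [/eqP ->|Hik].
  by case: (Hz k).
move=> a b Ha Hb.
have [nzk sbk] := Hz k.
have Hc := nz_supp nzk.
apply: (@ltn_trans (size (z k)).-1); first exact: IH.
exact: sbk.
Qed.

Lemma block_min {F : countFieldType} (z : nat -> {poly F}) :
  block_seq z -> forall i j, (z i)`_j != 0 -> (i <= j)%N.
Proof.
move=> Hz i; elim: i => // i IH j Hj.
have [nzi sbi] := Hz i.
have Hc := nz_supp nzi.
have := IH _ Hc; have := sbi _ _ Hc Hj. move=> h1 h2.
exact: (leq_ltn_trans h2 h1).
Qed.

Definition span {F : countFieldType} (z : nat -> {poly F}) (x : {poly F}) : Prop :=
  exists (n : nat) (c : nat -> F), x = \sum_(i < n) c i *: z i.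

Lemma block_span {F : countFieldType} (V : {poly F} -> Prop) :
  block_subspace V -> exists z, block_seq z /\ forall x, V x <-> span z x.
Proof. by []. Qed.

Lemma sum_widen {F : countFieldType} (z : nat -> {poly F}) (c : nat -> F) n N :
  (n <= N)%N ->
  \sum_(i < n) c i *: z i = \sum_(i < N) (if (i < n)%N then c i else 0) *: z i.
Proof.
move=> H; rewrite (big_ord_widen N (fun i => c i *: z i) H) big_mkcond /=.
by apply: eq_bigr => i _; case: ifP => //; rewrite scale0r.
Qed.

Lemma span0 {F : countFieldType} (z : nat -> {poly F}) : span z 0.
Proof. by exists 0%N, (fun _ => 0); rewrite big_ord0. Qed.

Lemma spanD {F : countFieldType} (z : nat -> {poly F}) a b :
  span z a -> span z b -> span z (a + b).
Proof.
move=> [n [c ->]] [m [d ->]].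
exists (n + m)%N, (fun i => (if (i < n)%N then c i else 0) + (if (i < m)%N then d i else 0)).
rewrite (sum_widen _ _ (leq_addr m n)) (sum_widen _ _ (leq_addl n m)) -big_split /=.
by apply: eq_bigr => i _; rewrite scalerDl.
Qed.

Lemma spanZ {F : countFieldType} (z : nat -> {poly F}) a (k : F) :
  span z a -> span z (k *: a).
Proof.
move=> [n [c ->]]; exists n, (fun i => k * c i).
rewrite scaler_sumr; apply: eq_bigr => i _; by rewrite scalerA.
Qed.

Lemma span_sum {F : countFieldType} (z : nat -> {poly F}) (w : nat -> {poly F}) (c : nat -> F) n :
  (forall i, (i < n)%N -> c i = 0 \/ span z (w i)) -> span z (\sum_(i < n) c i *: w i).
Proof.
elim: n => [|n IH] H; first by rewrite big_ord0; apply: span0.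
rewrite big_ord_recr /=; apply: spanD.
  by apply: IH => i Hi; apply: H; apply: ltnW.
case: (H n (ltnSn n)) => [->|Hw]; first by rewrite scale0r; apply: span0.
exact: spanZ.
Qed.

Lemma span_elt {F : countFieldType} (z : nat -> {poly F}) i : span z (z i).
Proof.
exists i.+1, (fun j => if j == i then 1 else 0).
rewrite big_ord_recr /= eqxx scale1r big1 ?add0r // => j _.
by rewrite (ltn_eqF (ltn_ord j)) scale0r.
Qed.

Lemma coef_span {F : countFieldType} (z : nat -> {poly F}) (c : nat -> F) n k j :
  block_seq z -> (k < n)%N -> (z k)`_j != 0 ->
  (\sum_(i < n) c i *: z i)`_j = c k * (z k)`_j.
Proof.
move=> Hz Hk Hj.
rewrite coef_sum (bigD1 (Ordinal Hk)) //= coefZ big1 ?addr0 // => i Hi.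
have Hik : (i : nat) != k by apply: contra Hi => /eqP Hik; apply/eqP; apply: val_inj.
rewrite coefZ.
case: (boolP ((z i)`_j == 0)) => [/eqP ->|Hij]; first by rewrite mulr0.
exfalso; case: (ltngtP i k) => Hc.
- by have := block_trans Hz Hc Hij Hj; rewrite ltnn.
- by have := block_trans Hz Hc Hj Hij; rewrite ltnn.
- by move: Hik; rewrite Hc eqxx.
Qed.

Lemma span_zero_coef {F : countFieldType} (z : nat -> {poly F}) (c : nat -> F) n k :
  block_seq z -> (k < n)%N ->
  (forall j, (z k)`_j != 0 -> (\sum_(i < n) c i *: z i)`_j = 0) -> c k = 0.
Proof.
move=> Hz Hk H.
have [nz _] := Hz k.
have Hj := nz_supp nz.
have := H _ Hj; rewrite (coef_span _ Hz Hk Hj) => /eqP.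
by rewrite mulf_eq0 (negbTE Hj) orbF => /eqP.
Qed.

Definition beyondb {F : countFieldType} (N : nat) (x : {poly F}) : bool :=
  all (fun i => x`_i == 0) (iota 0 N.+1).

Lemma beyondP {F : countFieldType} N (x : {poly F}) : beyond N x <-> beyondb N x.
Proof.
split.
- move=> H; apply/allP => i; rewrite mem_iota add0n /= => Hi.
  apply: contraT => Hx; have := H _ Hx; by rewrite ltnNge -ltnS Hi.
- move=> /allP H i Hx; rewrite ltnNge -ltnS; apply/negP => Hi.
  have := H i; rewrite mem_iota add0n /= Hi => /(_ isT); by rewrite (negbTE Hx).
Qed.

Lemma block_beyond {F : countFieldType} (z : nat -> {poly F}) N :
  block_seq z -> beyond N (z N.+1).
Proof. move=> Hz i Hi; exact: block_min Hz _ _ Hi. Qed.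

Lemma beyond_up {F : countFieldType} (z : nat -> {poly F}) N i k :
  block_seq z -> (i <= k)%N -> beyond N (z i) -> beyond N (z k).
Proof.
move=> Hz; elim: k => [|k IH]; first by rewrite leqn0 => /eqP ->.
rewrite leq_eqVlt => /orP [/eqP ->//|Hik] Hb j Hj.
have Hk := IH Hik Hb.
have [nzk sbk] := Hz k.
have Hc := nz_supp nzk.
exact: ltn_trans (Hk _ Hc) (sbk _ _ Hc Hj).
Qed.

Lemma sum_shift {F : countFieldType} (w : nat -> {poly F}) m n :
  \sum_(i < m + n) w i = \sum_(i < m) w i + \sum_(i < n) w (m + i)%N.
Proof.
elim: n => [|n IH]; first by rewrite addn0 big_ord0 addr0.
by rewrite addnS !big_ord_recr /= IH addrA.
Qed.

Lemma not_beyond {F : countFieldType} N (y : {poly F}) :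
  ~~ beyondb N y -> exists j, y`_j != 0 /\ (j <= N)%N.
Proof.
move=> /allPn [j]; rewrite mem_iota add0n /= ltnS => Hj Hy; by exists j.
Qed.

Lemma cW_block {F : countFieldType} (Z : {poly F} -> Prop) N :
  block_subspace Z -> block_subspace (cW Z N).
Proof.
move=> [z [Hz HZ]].
have exP : exists i, beyondb N (z i) by exists N.+1; apply/beyondP; exact: block_beyond.
case: (ex_minnP exP) => i0 Hi0 Hmin.
have Hup : forall i, (i0 <= i)%N -> beyond N (z i).
  move=> i Hi; apply: (beyond_up Hz Hi); exact/beyondP.
exists (fun i => z (i0 + i)%N); split.
  by move=> i; case: (Hz (i0 + i)%N); rewrite addnS.
move=> x; split.
- move=> [/HZ [n [c Hx]] Hb].
  have Hc0 : forall i, (i < i0)%N -> (i < n)%N -> c i = 0.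
    move=> i Hi Hin.
    have Hnot : ~~ beyondb N (z i).
      by apply: contraT; rewrite negbK => Hb'; have := Hmin _ Hb'; rewrite leqNgt Hi.
    have [j [Hj HjN]] := not_beyond Hnot.
    have := coef_span c Hz Hin Hj; rewrite -Hx.
    case: (boolP (x`_j == 0)) => [/eqP -> /esym/eqP|Hxj _].
      by rewrite mulf_eq0 (negbTE Hj) orbF => /eqP.
    by have := Hb _ Hxj; rewrite ltnNge HjN.
  exists n, (fun i => if (i0 + i < n)%N then c (i0 + i)%N else 0).
  rewrite Hx (sum_widen _ _ (leq_addl i0 n)) (sum_shift (fun i => (if (i < n)%N then c i else 0) *: z i)) big1 ?add0r.
    by apply: eq_bigr => i _.
  move=> i _; case: ifP => Hin; last by rewrite scale0r.
  by rewrite (Hc0 _ (ltn_ord i) Hin) scale0r.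
- move=> [n [c Hx]]; split.
    apply/HZ; rewrite Hx; apply: (span_sum (w := fun i => z (i0 + i)%N)) => i _; right; exact: span_elt.
  move=> j; rewrite Hx coef_sum => Hs.
  have [i _ Hi] : exists2 i : 'I_n, true & (c i *: z (i0 + i)%N)`_j != 0.
    apply/exists_inP; apply: contraR Hs => /exists_inPn H.
    by rewrite big1 // => i _; apply/eqP; move: (H i isT); rewrite negbK.
  rewrite coefZ mulf_eq0 negb_or in Hi; case/andP: Hi => _ Hi.
  exact: Hup _ (leq_addr _ _) _ Hi.
Qed.

Lemma block_elt {F : countFieldType} (Y : {poly F} -> Prop) M :
  block_subspace Y -> exists x, Y x /\ x != 0 /\ beyond M x.
Proof.
move=> [z [Hz HY]]; exists (z M.+1); split; first by apply/HY; apply: span_elt.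
split; first by case: (Hz M.+1).
exact: block_beyond.
Qed.

Lemma block_sum {F : countFieldType} (Y : {poly F} -> Prop) (w : nat -> {poly F}) (c : nat -> F) n :
  block_subspace Y -> (forall i, (i < n)%N -> c i = 0 \/ Y (w i)) -> Y (\sum_(i < n) c i *: w i).
Proof.
move=> [z [Hz HY]] H; apply/HY; apply: span_sum => i Hi.
case: (H i Hi) => [->|/HY]; [by left | by right].
Qed.

Lemma block_sub_span {F : countFieldType} (Y : {poly F} -> Prop) (w : nat -> {poly F}) x :
  block_subspace Y -> (forall i, Y (w i)) -> span w x -> Y x.
Proof. move=> HY Hw [n [c ->]]; apply: (block_sum (w:=w) (c:=c) (n:=n) HY) => i _; right; exact: Hw. Qed.

Lemma beyond_size {F : countFieldType} N (x : {poly F}) : x != 0 -> beyond N x -> (N < size x)%N.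
Proof.
move=> nz Hb; have H := nz_supp nz; have := Hb _ H.
move/leq_trans; apply; exact: leq_pred.
Qed.

Definition inh_set {F : countFieldType} : inhabited ({poly F} -> Prop) := inhabits (fun _ => True).
Definition inh_poly {F : countFieldType} : inhabited {poly F} := inhabits 0.

Definition pickb {F : countFieldType} (Y : {poly F} -> Prop) (M : nat) : {poly F} :=
  epsilon inh_poly (fun x => Y x /\ x != 0 /\ beyond M x).

Lemma pickbP {F : countFieldType} (Y : {poly F} -> Prop) M :
  block_subspace Y -> Y (pickb Y M) /\ pickb Y M != 0 /\ beyond M (pickb Y M).
Proof. move=> HY; exact: (epsilon_spec inh_poly (fun x => Y x /\ x != 0 /\ beyond M x) (block_elt M HY)). Qed.

Lemma diag {F : countFieldType} (V : {poly F} -> Prop) (P : nat -> ({poly F} -> Prop) -> Prop) :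
  block_subspace V ->
  (forall k Y, block_subspace Y -> subset_of Y V ->
     exists Y', block_subspace Y' /\ subset_of Y' Y /\ P k Y') ->
  exists X, block_subspace X /\ subset_of X V /\
    forall k, exists Y N, P k Y /\ forall x, X x -> beyond N x -> Y x.
Proof.
move=> HV Hstep.
pose good (Y : {poly F} -> Prop) := block_subspace Y /\ subset_of Y V.
pose step k Y := epsilon inh_set (fun Y' => good Y -> block_subspace Y' /\ subset_of Y' Y /\ P k Y').
have stepP : forall k Y, good Y -> block_subspace (step k Y) /\ subset_of (step k Y) Y /\ P k (step k Y).
  move=> k Y HY; apply: (epsilon_spec inh_set (fun Y' => good Y -> block_subspace Y' /\ subset_of Y' Y /\ P k Y')); last exact: HY.
  have [Y' HY'] := Hstep k Y HY.1 HY.2; by exists Y' => _.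
pose Ys := fix Ys k := if k is k'.+1 then step k' (Ys k') else V.
have Ygood : forall k, good (Ys k).
  elim=> [|k IH]; first by split => //.
  have [h1 [h2 _]] := stepP k _ IH; split => // x Hx; exact: IH.2 _ (h2 _ Hx).
have YP : forall k, P k (Ys k.+1) by move=> k; exact: (stepP k _ (Ygood k)).2.2.
have Ynest : forall i k, (i <= k)%N -> subset_of (Ys k) (Ys i).
  move=> i k; elim: k => [|k IH]; first by rewrite leqn0 => /eqP ->.
  rewrite leq_eqVlt => /orP [/eqP ->//|Hik] x Hx.
  apply: IH Hik _ ((stepP k _ (Ygood k)).2.1 _ Hx).
pose bnd := fix bnd k := if k is k'.+1 then size (pickb (Ys k) (bnd k')) else 0%N.
pose xs k := pickb (Ys k.+1) (bnd k).
have xsP : forall k, Ys k.+1 (xs k) /\ xs k != 0 /\ beyond (bnd k) (xs k).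
  move=> k; apply: pickbP; exact: (Ygood k.+1).1.
have bnd_lt : forall k, (bnd k < bnd k.+1)%N.
  move=> k; have [_ [nz Hb]] := xsP k; exact: beyond_size.
have bnd_mono : forall i k, (i <= k)%N -> (bnd i <= bnd k)%N.
  move=> i k; elim: k => [|k IH]; first by rewrite leqn0 => /eqP ->.
  rewrite leq_eqVlt => /orP [/eqP ->//|Hik]; exact: leq_trans (IH Hik) (ltnW (bnd_lt k)).
have Hblock : block_seq xs.
  move=> k; split; first by have [_ [nz _]] := xsP k.
  move=> a b Ha Hb; apply: (leq_trans (supp_lt_size Ha)).
  by have [_ [_ Hb']] := xsP k.+1; exact: ltnW (Hb' _ Hb).
exists (span xs); split; first by exists xs; split.
split.
  move=> x Hx; apply: (block_sub_span (w:=xs) HV _ Hx) => i.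
  have [Hxi _] := xsP i; exact: (Ygood i.+1).2 _ Hxi.
move=> k; exists (Ys k.+1), (bnd k); split => // x [n [c Hx]] Hb.
rewrite Hx; apply: block_sum => [|i Hi]; first exact: (Ygood k.+1).1.
case: (ltnP i k) => Hik.
- left; have [_ [nz _]] := xsP i; have Hl := nz_supp nz.
  have := coef_span c Hblock Hi Hl; rewrite -Hx.
  case: (boolP (x`_(size (xs i)).-1 == 0)) => [/eqP -> /esym/eqP|Hxj _].
    by rewrite mulf_eq0 (negbTE Hl) orbF => /eqP.
  exfalso; have := Hb _ Hxj; rewrite ltnNge; move/negP; apply.
  apply: leq_trans (bnd_mono _ _ Hik).
  exact: leq_pred.
- right; have [Hx' _] := xsP i; exact: Ynest _ _ (Hik : (k.+1 <= i.+1)%N) _ Hx'.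
Qed.

Definition legZ {F : countFieldType} (W : {poly F} -> Prop) (Z : nat -> {poly F} -> Prop) i :=
  block_subspace (Z i) /\ subset_of (Z i) W.

Definition Geven {F : countFieldType} (A : (nat -> {poly F}) -> Prop) (T : seq {poly F} -> Prop)
  (W : {poly F} -> Prop) (p : seq {poly F}) (x : nat -> {poly F}) (n : nat -> nat)
  (Z : nat -> {poly F} -> Prop) (y : nat -> {poly F}) : Prop :=
  (forall k, (forall i, (i <= k)%N -> legZ W Z i) ->
     (forall i, (i < k)%N -> tail_of W (n i) (y i) /\ T (p ++ mkseq (interleave x y) i.*2.+2)) ->
     Z k (x k) /\ x k != 0 /\ T (p ++ mkseq (interleave x y) k.*2.+1)) /\
  ((forall i, legZ W Z i /\ (tail_of W (n i) (y i) /\ T (p ++ mkseq (interleave x y) i.*2.+2))) ->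
     A (outcome p (interleave x y))).

Definition Godd {F : countFieldType} (A : (nat -> {poly F}) -> Prop) (T : seq {poly F} -> Prop)
  (W : {poly F} -> Prop) (p : seq {poly F}) (x : nat -> {poly F}) (n : nat -> nat)
  (Z : nat -> {poly F} -> Prop) (y : nat -> {poly F}) : Prop :=
  (forall k, (forall i, (i <= k)%N -> tail_of W (n i) (y i) /\ T (p ++ mkseq (interleave y x) i.*2.+1) /\ legZ W Z i) ->
     Z k (x k) /\ x k != 0 /\ T (p ++ mkseq (interleave y x) k.*2.+2)) /\
  ((forall i, tail_of W (n i) (y i) /\ T (p ++ mkseq (interleave y x) i.*2.+1) /\ legZ W Z i) ->
     A (outcome p (interleave y x))).

Definition mvE {F : countFieldType} (s : stratI_even F) Z (y : nat -> {poly F}) i :=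
  s (Z 0%N) [seq (y j, Z j.+1) | j <- iota 0 i].
Definition mvO {F : countFieldType} (s : stratI_odd F) Z (y : nat -> {poly F}) i :=
  s.2 [seq (y j, Z j) | j <- iota 0 i.+1].
Definition nO {F : countFieldType} (s : stratI_odd F) Z (y : nat -> {poly F}) i :=
  match i with 0%N => s.1 | i'.+1 => (mvO s Z y i').2 end.

Lemma wins_evenE {F : countFieldType} A T W p (s : stratI_even F) :
  wins_even A T W p s <-> forall Z y, Geven A T W p (fun i => (mvE s Z y i).1) (fun i => (mvE s Z y i).2) Z y.
Proof. reflexivity. Qed.

Lemma wins_oddE {F : countFieldType} A T W p (s : stratI_odd F) :
  wins_odd A T W p s <-> forall Z y, Godd A T W p (fun i => (mvO s Z y i).1) (nO s Z y) Z y.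
Proof. reflexivity. Qed.

Lemma mkseq_add {T0 : Type} (f : nat -> T0) m n :
  mkseq f (m + n) = mkseq f m ++ mkseq (fun i => f (m + i)%N) n.
Proof.
rewrite /mkseq iotaD map_cat; congr (_ ++ _).
by rewrite add0n -{1}[m]addn0 iotaDl -map_comp.
Qed.

Lemma pos_shift {T0 : Type} (p : seq T0) (u : nat -> T0) s t :
  p ++ mkseq u (s + t) = (p ++ mkseq u s) ++ mkseq (fun i => u (s + i)%N) t.
Proof. by rewrite mkseq_add catA. Qed.

Lemma pos_shift1 {T0 : Type} (p : seq T0) (u : nat -> T0) t :
  p ++ mkseq u t.+1 = rcons p (u 0%N) ++ mkseq (fun i => u i.+1) t.
Proof. by rewrite -add1n pos_shift /= cats1. Qed.

Lemma mkseq_eqn {T0 : Type} (f g : nat -> T0) k :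
  (forall i, (i < k)%N -> f i = g i) -> mkseq f k = mkseq g k.
Proof. move=> H; apply/eq_in_map => i; rewrite mem_iota add0n /=; exact: H. Qed.

Lemma outcome_shift {F : countFieldType} (p : seq {poly F}) (u : nat -> {poly F}) s :
  outcome p u = outcome (p ++ mkseq u s) (fun i => u (s + i)%N).
Proof.
apply: functional_extensionality => j; rewrite /outcome size_cat size_mkseq.
case: (ltnP j (size p)) => Hj.
  by rewrite (ltn_addr _ Hj) nth_cat Hj.
case: ifP => Hj2.
  rewrite nth_cat ltnNge Hj /= nth_mkseq //; by rewrite ltn_subLR.
move/negbT: Hj2; rewrite -leqNgt => Hj2.
congr u; rewrite subnDA addnC subnK //; rewrite leq_subRL //.
Qed.

Lemma outcome_shift1 {F : countFieldType} (p : seq {poly F}) (u : nat -> {poly F}) :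
  outcome p u = outcome (rcons p (u 0%N)) (fun i => u i.+1).
Proof. by rewrite (outcome_shift p u 1) /= cats1. Qed.

Lemma il1 {F : countFieldType} (a b : nat -> {poly F}) t :
  interleave a b t.+1 = interleave b (fun i => a i.+1) t.
Proof.
rewrite /interleave /=; case: (boolP (odd t)) => Ht /=.
  by rewrite uphalf_half Ht.
by rewrite uphalf_half (negbTE Ht).
Qed.

Lemma il2 {F : countFieldType} (a b : nat -> {poly F}) m t :
  interleave a b (m.*2 + t) = interleave (fun i => a (m + i)%N) (fun i => b (m + i)%N) t.
Proof.
rewrite /interleave oddD odd_double /= halfD odd_double /= doubleK; by case: ifP.
Qed.

Lemma posI {F : countFieldType} (p : seq {poly F}) (a b : nat -> {poly F}) j :
  p ++ mkseq (interleave a b) j.+1 = rcons p (a 0%N) ++ mkseq (interleave b (fun i => a i.+1)) j.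
Proof. rewrite pos_shift1; congr (_ ++ _); apply: eq_mkseq => i; exact: il1. Qed.

Lemma outI {F : countFieldType} (p : seq {poly F}) (a b : nat -> {poly F}) :
  outcome p (interleave a b) = outcome (rcons p (a 0%N)) (interleave b (fun i => a i.+1)).
Proof.
rewrite outcome_shift1; congr outcome; apply: functional_extensionality => i; exact: il1.
Qed.

Lemma Godd_triv {F : countFieldType} A T W p (x : nat -> {poly F}) n Z y :
  ~ (tail_of W (n 0%N) (y 0%N) /\ T (rcons p (y 0%N)) /\ legZ W Z 0) -> Godd A T W p x n Z y.
Proof.
move=> H; split.
  move=> k Hk; exfalso; apply: H; have := Hk 0%N isT; by rewrite /= cats1.
move=> Hk; exfalso; apply: H; have := Hk 0%N; by rewrite /= cats1.
Qed.

Lemma Godd_Geven {F : countFieldType} A T W p (x : nat -> {poly F}) n Z y :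
  (tail_of W (n 0%N) (y 0%N) /\ T (rcons p (y 0%N)) /\ legZ W Z 0) ->
  (Godd A T W p x n Z y <-> Geven A T W (rcons p (y 0%N)) x (fun i => n i.+1) Z (fun i => y i.+1)).
Proof.
move=> H0; split.
- move=> [H1 H2]; split.
  + move=> k HZ HY; rewrite -posI -doubleS; apply: H1 => -[_|i Hi]; first by move: H0; rewrite /= cats1.
    have [h1 h2] := HY i Hi; rewrite doubleS posI; split => //; split => //; exact: HZ.
  + move=> Hall; rewrite -outI; apply: H2 => -[|i]; first by move: H0; rewrite /= cats1.
    have [h1 [h2 h3]] := Hall i; rewrite doubleS posI; split => //; split => //.
    exact: (Hall i.+1).1.
- move=> [H1 H2]; split.
  + move=> k HZ; rewrite -doubleS posI; apply: H1 => [i Hi|i Hi]; first by have [_ [_ ?]] := HZ i Hi.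
    have [h1 [h2 _]] := HZ i.+1 Hi; split => //; by rewrite -posI -doubleS.
  + move=> Hall; rewrite outI; apply: H2 => i; split; first by have [_ [_ ?]] := Hall i.
    have [h1 [h2 _]] := Hall i.+1; split => //; by rewrite -posI -doubleS.
Qed.

Lemma Geven_Godd {F : countFieldType} A T W p (x : nat -> {poly F}) n Z y :
  (legZ W Z 0 -> Z 0%N (x 0%N) /\ x 0%N != 0 /\ T (rcons p (x 0%N))) ->
  (legZ W Z 0 -> Godd A T W (rcons p (x 0%N)) (fun i => x i.+1) n (fun i => Z i.+1) y) ->
  Geven A T W p x n Z y.
Proof.
move=> H0 H1; split.
- move=> [|k] HZ HY.
    by have := H0 (HZ 0%N isT); rewrite /= cats1.
  have [H1a _] := H1 (HZ 0%N isT).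
  rewrite doubleS posI; apply: H1a => i Hi.
  have [h1 h2] := HY i Hi; split => //; split; first by rewrite -posI.
  exact: HZ.
- move=> Hall; rewrite outI; apply: (H1 (Hall 0%N).1).2 => i.
  have [h1 [h2 h3]] := Hall i; split => //; split; first by rewrite -posI.
  exact: (Hall i.+1).1.
Qed.

Lemma tail_mono {F : countFieldType} (W W' : {poly F} -> Prop) n z :
  subset_of W' W -> tail_of W' n z -> tail_of W n z.
Proof. by move=> H [h1 h2]; split => //; apply: H. Qed.

Lemma legZ_mono {F : countFieldType} (W W' : {poly F} -> Prop) Z i :
  subset_of W' W -> legZ W' Z i -> legZ W Z i.
Proof. by move=> H [h1 h2]; split => // x Hx; apply: H; apply: h2. Qed.

Lemma Geven_mono {F : countFieldType} A T (W W' : {poly F} -> Prop) p x n Z y :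
  subset_of W' W -> Geven A T W p x n Z y -> Geven A T W' p x n Z y.
Proof.
move=> HW [H1 H2]; split.
  move=> k HZ HY; apply: H1 => i Hi; first exact: legZ_mono (HZ i Hi).
  have [h1 h2] := HY i Hi; split => //; exact: tail_mono h1.
move=> Hall; apply: H2 => i; have [h1 [h2 h3]] := Hall i.
split; first exact: legZ_mono h1.
split => //; exact: tail_mono h2.
Qed.

Lemma Godd_mono {F : countFieldType} A T (W W' : {poly F} -> Prop) p x n Z y :
  subset_of W' W -> Godd A T W p x n Z y -> Godd A T W' p x n Z y.
Proof.
move=> HW [H1 H2]; split.
  move=> k HZ; apply: H1 => i Hi; have [h1 [h2 h3]] := HZ i Hi.
  split; first exact: tail_mono h1.
  split => //; exact: legZ_mono h3.
move=> Hall; apply: H2 => i; have [h1 [h2 h3]] := Hall i.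
split; first exact: tail_mono h1.
split => //; exact: legZ_mono h3.
Qed.

Lemma legZ_cW {F : countFieldType} (W : {poly F} -> Prop) Z N i :
  legZ W Z i -> legZ (cW W N) (fun j => cW (Z j) N) i.
Proof.
move=> [h1 h2]; split; first exact: cW_block.
move=> x [Hx Hb]; split => //; exact: h2.
Qed.

Lemma tail_cW {F : countFieldType} (W : {poly F} -> Prop) n N z :
  tail_of W (maxn n N) z -> tail_of (cW W N) n z.
Proof.
move=> [h1 [h2 h3]]; split; last split => //.
  split => // i Hi; have := h3 i Hi; rewrite gtn_max => /andP [].
  by [].
move=> i Hi; have := h3 i Hi; rewrite gtn_max => /andP [].
by [].
Qed.

Lemma Geven_tail {F : countFieldType} A T (W : {poly F} -> Prop) N p x n Z y :
  Geven A T (cW W N) p x n (fun i => cW (Z i) N) y -> Geven A T W p x (fun i => maxn (n i) N) Z y.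
Proof.
move=> [H1 H2]; split.
  move=> k HZ HY; have [[h1 _] h2] := H1 k (fun i Hi => legZ_cW N (HZ i Hi))
    (fun i Hi => let: conj a b := HY i Hi in conj (tail_cW a) b).
  by [].
move=> Hall; apply: H2 => i; have [h1 [h2 h3]] := Hall i.
split; first exact: legZ_cW.
split => //; exact: tail_cW.
Qed.

Lemma Godd_tail {F : countFieldType} A T (W : {poly F} -> Prop) N p x n Z y :
  Godd A T (cW W N) p x n (fun i => cW (Z i) N) y -> Godd A T W p x (fun i => maxn (n i) N) Z y.
Proof.
move=> [H1 H2]; split.
  move=> k HZ; have [[h1 _] h2] := H1 k (fun i Hi =>
     let: conj a (conj b c) := HZ i Hi in conj (tail_cW a) (conj b (legZ_cW N c))).
  by [].
move=> Hall; apply: H2 => i; have [h1 [h2 h3]] := Hall i.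
split; first exact: tail_cW.
split => //; exact: legZ_cW.
Qed.

Definition Win {F : countFieldType} A T (W : {poly F} -> Prop) p := I_has_strategy A T W p.

Lemma Win_mono {F : countFieldType} A T (W W' : {poly F} -> Prop) p :
  subset_of W' W -> Win A T W p -> Win A T W' p.
Proof.
rewrite /Win /I_has_strategy => HW; case: ifP => _ [s Hs]; exists s.
  move: Hs; rewrite !wins_oddE => Hs Z y; exact: Godd_mono (Hs Z y).
move: Hs; rewrite !wins_evenE => Hs Z y; exact: Geven_mono (Hs Z y).
Qed.

Lemma Win_tail {F : countFieldType} A T (W : {poly F} -> Prop) N p :
  Win A T (cW W N) p -> Win A T W p.
Proof.
rewrite /Win /I_has_strategy; case: ifP => _ [s Hs].
- exists (maxn s.1 N, fun h => let r := s.2 [seq (yz.1, cW yz.2 N) | yz <- h] in (r.1, maxn r.2 N)).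
  move: Hs; rewrite !wins_oddE => Hs Z y.
  have := Godd_tail (Hs (fun i => cW (Z i) N) y).
  have E : forall i, mvO s (fun i => cW (Z i) N) y i =
     s.2 [seq (yz.1, cW yz.2 N) | yz <- [seq (y j, Z j) | j <- iota 0 i.+1]].
    by move=> i; rewrite /mvO -map_comp.
  set G1 := Godd _ _ _ _ _ _ _ _; set G2 := Godd _ _ _ _ _ _ _ _.
  suff -> : G2 = G1 by [].
  rewrite /G1 /G2; congr Godd.
    by apply: functional_extensionality => i; rewrite E.
  apply: functional_extensionality => -[|i] //=; by rewrite E.
- exists (fun Z0 h => let r := s (cW Z0 N) [seq (yz.1, cW yz.2 N) | yz <- h] in (r.1, maxn r.2 N)).
  move: Hs; rewrite !wins_evenE => Hs Z y.
  have := Geven_tail (Hs (fun i => cW (Z i) N) y).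
  have E : forall i, mvE s (fun i => cW (Z i) N) y i =
     s (cW (Z 0%N) N) [seq (yz.1, cW yz.2 N) | yz <- [seq (y j, Z j.+1) | j <- iota 0 i]].
    by move=> i; rewrite /mvE -map_comp.
  set G1 := Geven _ _ _ _ _ _ _ _; set G2 := Geven _ _ _ _ _ _ _ _.
  suff -> : G2 = G1 by [].
  rewrite /G1 /G2; congr Geven.
    by apply: functional_extensionality => i; rewrite E.
  by apply: functional_extensionality => i; rewrite E.
Qed.

Lemma map_iotaS {T0 : Type} (f : nat -> T0) i :
  [seq f j | j <- iota 0 i.+1] = f 0%N :: [seq f j.+1 | j <- iota 0 i].
Proof. by rewrite /= -[1%N]addn0 iotaDl -map_comp. Qed.

Lemma Geven_triv {F : countFieldType} A T W p (x : nat -> {poly F}) n Z y :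
  ~ legZ W Z 0 -> Geven A T W p x n Z y.
Proof.
move=> H; split; first by move=> k HZ; exfalso; apply: H; exact: HZ.
move=> Hall; exfalso; apply: H; exact: (Hall 0%N).1.
Qed.

Definition inh_se {F : countFieldType} : inhabited (stratI_even F) := inhabits (fun _ _ => (0, 0%N)).
Definition inh_so {F : countFieldType} : inhabited (stratI_odd F) := inhabits (0%N, fun _ => (0, 0%N)).

Lemma Win_odd_step {F : countFieldType} A T (W : {poly F} -> Prop) p :
  odd (size p) ->
  (exists n, forall z, tail_of W n z -> T (rcons p z) -> Win A T W (rcons p z)) -> Win A T W p.
Proof.
move=> Hp [n Hn]; rewrite /Win /I_has_strategy Hp.
pose rho z := epsilon inh_se (fun s => wins_even A T W (rcons p z) s).
exists (n, fun h => match h with [::] => (0, 0%N) | (y0, Z0) :: h' => rho y0 Z0 h' end).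
apply/wins_oddE => Z y.
case: (classic (tail_of W n (y 0%N) /\ T (rcons p (y 0%N)) /\ legZ W Z 0)) => H0; last first.
  by apply: Godd_triv.
apply/(Godd_Geven _ _ H0).
have Hw : wins_even A T W (rcons p (y 0%N)) (rho (y 0%N)).
  apply: (epsilon_spec inh_se (fun s => wins_even A T W (rcons p (y 0%N)) s)).
  by have := Hn _ H0.1 H0.2.1; rewrite /Win /I_has_strategy size_rcons /= Hp /=.
move: Hw; rewrite wins_evenE => Hw; have := Hw Z (fun i => y i.+1).
have E : forall i, mvO (n, fun h => match h with [::] => (0, 0%N) | (y0, Z0) :: h' => rho y0 Z0 h' end) Z y i
   = mvE (rho (y 0%N)) Z (fun i => y i.+1) i.
  by move=> i; rewrite /mvO map_iotaS.
congr Geven; apply: functional_extensionality => i; first by rewrite E.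
by rewrite /nO E.
Qed.

Lemma Win_even_step {F : countFieldType} A T (W : {poly F} -> Prop) p :
  ~~ odd (size p) ->
  (forall Z, block_subspace Z -> subset_of Z W ->
     exists x, Z x /\ x != 0 /\ T (rcons p x) /\ Win A T W (rcons p x)) -> Win A T W p.
Proof.
move=> Hp Hst; rewrite /Win /I_has_strategy (negbTE Hp).
pose P Z x := block_subspace Z -> subset_of Z W -> Z x /\ x != 0 /\ T (rcons p x) /\ Win A T W (rcons p x).
pose chi Z := epsilon inh_poly (P Z).
have chiP : forall Z, P Z (chi Z).
  move=> Z; apply: (epsilon_spec inh_poly (P Z)).
  case: (classic (block_subspace Z /\ subset_of Z W)) => [[h1 h2]|h].
    have [x Hx] := Hst Z h1 h2; by exists x.
  by exists 0 => h1 h2; exfalso; apply: h.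
pose rho x := epsilon inh_so (fun s => wins_odd A T W (rcons p x) s).
pose s : stratI_even F := fun Z0 h => match h with [::] => (chi Z0, (rho (chi Z0)).1) | _ => (rho (chi Z0)).2 h end.
exists s; apply/wins_evenE => Z y.
have Hx0 : (mvE s Z y 0).1 = chi (Z 0%N) by [].
apply: Geven_Godd.
  move=> [h1 h2]; rewrite Hx0; have [a [b [c _]]] := chiP (Z 0%N) h1 h2; by [].
move=> [h1 h2]; rewrite Hx0.
have Hw : wins_odd A T W (rcons p (chi (Z 0%N))) (rho (chi (Z 0%N))).
  apply: (epsilon_spec inh_so (fun s => wins_odd A T W (rcons p (chi (Z 0%N))) s)).
  have [_ [_ [_ HW]]] := chiP (Z 0%N) h1 h2.
  by move: HW; rewrite /Win /I_has_strategy size_rcons /= (negbTE Hp) /=.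
move: Hw; rewrite wins_oddE => Hw; have := Hw (fun i => Z i.+1) y.
have E : forall i, mvE s Z y i.+1 = mvO (rho (chi (Z 0%N))) (fun i => Z i.+1) y i by [].
congr Godd; apply: functional_extensionality => -[|i] //; by rewrite E.
Qed.

Lemma Win_odd_res {F : countFieldType} A T (W : {poly F} -> Prop) p :
  odd (size p) -> Win A T W p ->
  exists n, forall z, tail_of W n z -> T (rcons p z) -> Win A T W (rcons p z).
Proof.
move=> Hp; rewrite /Win /I_has_strategy Hp => -[s Hs]; exists s.1 => z Hz Tz.
rewrite size_rcons /= Hp /=; exists (fun Z0 h => s.2 ((z, Z0) :: h)).
apply/wins_evenE => Z y.
case: (classic (legZ W Z 0)) => HZ0; last exact: Geven_triv.
pose y' j := if j is j'.+1 then y j' else z.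
move: Hs; rewrite wins_oddE => /(_ Z y') Hs.
have H0 : tail_of W (nO s Z y' 0) (y' 0%N) /\ T (rcons p (y' 0%N)) /\ legZ W Z 0 by [].
move: Hs; move/(Godd_Geven _ _ H0).
have E : forall i, mvO s Z y' i = mvE (fun Z0 h => s.2 ((z, Z0) :: h)) Z y i.
  by move=> i; rewrite /mvO map_iotaS.
have Ey : (fun i => y' i.+1) = y by apply: functional_extensionality.
rewrite Ey /=; congr Geven; apply: functional_extensionality => i; first by rewrite E.
by rewrite /nO E.
Qed.

Fixpoint gpos {F : countFieldType} (nx : seq {poly F} -> ({poly F} -> Prop) -> {poly F})
  (q : seq {poly F}) (Z0 : {poly F} -> Prop) (h : seq ({poly F} * ({poly F} -> Prop))) :=
  match h with [::] => (q, Z0) | (y, Z1) :: h' => gpos nx (q ++ [:: nx q Z0; y]) Z1 h' end.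

Lemma gpos_rcons {F : countFieldType} nx (q : seq {poly F}) Z0 h y Z1 :
  gpos nx q Z0 (rcons h (y, Z1)) =
  ((gpos nx q Z0 h).1 ++ [:: nx (gpos nx q Z0 h).1 (gpos nx q Z0 h).2; y], Z1).
Proof. by elim: h q Z0 => [|[y' Z'] h IH] q Z0 //=. Qed.

Lemma il_even {F : countFieldType} (x y : nat -> {poly F}) i : interleave x y i.*2 = x i.
Proof. by rewrite /interleave odd_double doubleK. Qed.
Lemma il_odd {F : countFieldType} (x y : nat -> {poly F}) i : interleave x y i.*2.+1 = y i.
Proof. by rewrite /interleave /= odd_double /= uphalf_double. Qed.

Lemma mkseq2 {F : countFieldType} (p : seq {poly F}) (x y : nat -> {poly F}) i :
  p ++ mkseq (interleave x y) i.*2.+2 = (p ++ mkseq (interleave x y) i.*2) ++ [:: x i; y i].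
Proof. by rewrite !mkseqS -!cats1 !catA il_even il_odd -catA. Qed.

Lemma mkseq1 {F : countFieldType} (p : seq {poly F}) (x y : nat -> {poly F}) i :
  p ++ mkseq (interleave x y) i.*2.+1 = rcons (p ++ mkseq (interleave x y) i.*2) (x i).
Proof. by rewrite mkseqS rcons_cat il_even. Qed.

Lemma size_pos {F : countFieldType} (p : seq {poly F}) (u : nat -> {poly F}) i :
  odd (size (p ++ mkseq u i.*2)) = odd (size p).
Proof. by rewrite size_cat size_mkseq oddD odd_double addbF. Qed.

Lemma Win_legal_even {F : countFieldType} A T (V W : {poly F} -> Prop) v0 p :
  is_rule V v0 T -> subset_of W V -> ~~ odd (size p) -> T p ->
  (forall u, A (outcome p u)) -> Win A T W p.
Proof.
move=> [_ [_ [_ Hr]]] HWV Hp Tp HA; rewrite /Win /I_has_strategy (negbTE Hp).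
pose nx q Z := epsilon inh_poly (fun x => Z x /\ x != 0 /\ T (rcons q x)).
have nxP : forall q Z, T q -> ~~ odd (size q) -> block_subspace Z -> subset_of Z W ->
    Z (nx q Z) /\ nx q Z != 0 /\ T (rcons q (nx q Z)).
  move=> q Z Tq Hq HZ HZW; apply: (epsilon_spec inh_poly (fun x => Z x /\ x != 0 /\ T (rcons q x))).
  have [n Hn] := Hr q Tq Hq.
  have [x [Zx [nz Hb]]] := block_elt n HZ.
  exists x; split => //; split => //; apply: Hn; split; first by apply: HWV; apply: HZW.
  by split.
pose s : stratI_even F := fun Z0 h => (nx (gpos nx p Z0 h).1 (gpos nx p Z0 h).2, 0%N).
exists s; apply/wins_evenE => Z y.
set x := fun i => (mvE s Z y i).1.
have Hg : forall i, gpos nx p (Z 0%N) [seq (y j, Z j.+1) | j <- iota 0 i] = (p ++ mkseq (interleave x y) i.*2, Z i).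
  elim=> [|i IH]; first by rewrite /= cats0.
  rewrite -addn1 iotaD add0n map_cat cats1 gpos_rcons IH /= addn1 doubleS mkseq2.
  congr (_ ++ _, _); congr [:: _ ; _]; by rewrite /x /mvE /s IH.
have Hx : forall i, x i = nx (p ++ mkseq (interleave x y) i.*2) (Z i).
  by move=> i; rewrite /x /mvE /s Hg.
split; last by move=> _; apply: HA.
move=> k HZ HY.
have Tk : T (p ++ mkseq (interleave x y) k.*2).
  case: k HZ HY => [|k] HZ HY; first by rewrite cats0.
  by have [_ h] := HY k (ltnSn k); rewrite doubleS.
have [h1 h2] := HZ k (leqnn k).
rewrite mkseq1 Hx; apply: nxP => //; by rewrite size_pos.
Qed.

Lemma il_agree {F : countFieldType} (x x1 y : nat -> {poly F}) K t :
  (forall i, (i < K)%N -> x i = x1 i) -> (t <= K.*2)%N ->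
  mkseq (interleave x y) t = mkseq (interleave x1 y) t.
Proof.
move=> H Ht; apply: mkseq_eqn => s Hs; rewrite /interleave; case: ifP => // _.
apply: H; rewrite -ltn_double; apply: leq_trans Ht; apply: leq_ltn_trans Hs.
rewrite -{2}(odd_double_half s) leq_addl //.
Qed.

Lemma pos_shift2 {F : countFieldType} (p : seq {poly F}) (x y : nat -> {poly F}) m t :
  p ++ mkseq (interleave x y) (m.*2 + t) =
  (p ++ mkseq (interleave x y) m.*2) ++ mkseq (interleave (fun i => x (m + i)%N) (fun i => y (m + i)%N)) t.
Proof. rewrite pos_shift; congr (_ ++ _); apply: eq_mkseq => i; exact: il2. Qed.

Lemma out_shift2 {F : countFieldType} (p : seq {poly F}) (x y : nat -> {poly F}) m :
  outcome p (interleave x y) =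
  outcome (p ++ mkseq (interleave x y) m.*2) (interleave (fun i => x (m + i)%N) (fun i => y (m + i)%N)).
Proof.
rewrite (outcome_shift _ _ m.*2); congr outcome; apply: functional_extensionality => i; exact: il2.
Qed.

Lemma find_iota_none (a : pred nat) i : (forall k, (k < i)%N -> ~~ a k) -> find a (iota 0 i) = i.
Proof.
move=> H; rewrite -{2}(size_iota 0 i); apply: hasNfind; apply/hasPn => k.
rewrite mem_iota add0n /=; exact: H.
Qed.

Lemma find_iota_J (a : pred nat) i J : (J < i)%N -> a J -> (forall k, (k < J)%N -> ~~ a k) ->
  find a (iota 0 i) = J.
Proof.
move=> HJ Ha H; rewrite -(subnKC (ltnW HJ)) iotaD find_cat.
have -> : has a (iota 0 J) = false.
  apply/negbTE/hasPn => k; rewrite mem_iota add0n /=; exact: H.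
rewrite size_iota add0n; case E: (i - J)%N => [|m]; first by move: HJ; rewrite -subn_gt0 E.
by rewrite /= Ha addn0.
Qed.

Lemma Geven_ST {F : countFieldType} A (S T : seq {poly F} -> Prop) W p x n Z y :
  (forall q, S q -> T q) -> (forall i, S (p ++ mkseq (interleave x y) i.*2.+2)) ->
  Geven A S W p x n Z y -> Geven A T W p x n Z y.
Proof.
move=> HST HS [H1 H2]; split.
  move=> k HZ HY; have [h1 [h2 h3]] := H1 k HZ (fun i Hi => conj (HY i Hi).1 (HS i)).
  by split => //; split => //; apply: HST.
move=> Hall; apply: H2 => i; have [h1 [h2 _]] := Hall i; by split => //; split => //.
Qed.

Lemma Geven_splice {F : countFieldType} A (S T : seq {poly F} -> Prop) W p (x x1 : nat -> {poly F}) n n1 Z y J :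
  (forall q, S q -> T q) ->
  (forall i, (i <= J)%N -> x i = x1 i /\ n i = n1 i) ->
  (forall i, (i < J)%N -> S (p ++ mkseq (interleave x1 y) i.*2.+2)) ->
  Geven A S W p x1 n1 Z y ->
  (T (p ++ mkseq (interleave x y) (J.+1).*2) ->
     Geven A T W (p ++ mkseq (interleave x y) (J.+1).*2) (fun m => x (J.+1 + m)%N)
       (fun m => n (J.+1 + m)%N) (fun m => Z (J.+1 + m)%N) (fun m => y (J.+1 + m)%N)) ->
  Geven A T W p x n Z y.
Proof.
move=> HST Hag HS [G1 _] HG.
have Hagx : forall i, (i < J.+1)%N -> x i = x1 i by move=> i Hi; exact: (Hag i Hi).1.
have Tq : (forall i, (i < J.+1)%N -> tail_of W (n i) (y i) /\ T (p ++ mkseq (interleave x y) i.*2.+2)) ->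
   T (p ++ mkseq (interleave x y) (J.+1).*2).
  by move=> HY; rewrite doubleS; exact: (HY J (ltnSn J)).2.
split.
- move=> k HZ HY; case: (leqP k J) => HkJ.
  + have [a [b c]] : Z k (x1 k) /\ x1 k != 0 /\ S (p ++ mkseq (interleave x1 y) k.*2.+1).
      apply: G1 => // i Hi; have [h1 h2] := HY i Hi; split.
        by rewrite -(Hag i (ltnW (leq_trans Hi HkJ))).2.
      exact: HS (leq_trans Hi HkJ).
    rewrite (Hag k HkJ).1 (@il_agree F x x1 y J.+1 k.*2.+1 Hagx) //; last first.
      by rewrite doubleS ltnS ltnW // ltnS leq_double.
    by split => //; split => //; apply: HST.
  + have Tqq := Tq (fun i Hi => HY i (leq_trans Hi HkJ)).
    have [G2 _] := HG Tqq.
    have Ek : k = (J.+1 + (k - J.+1))%N by rewrite subnKC.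
    have HZ' : forall i, (i <= k - J.+1)%N -> legZ W (fun m => Z (J.+1 + m)%N) i.
      move=> i Hi; apply: HZ; rewrite Ek leq_add2l //.
    have HY' : forall i, (i < k - J.+1)%N -> tail_of W (n (J.+1 + i)%N) (y (J.+1 + i)%N) /\
        T ((p ++ mkseq (interleave x y) (J.+1).*2) ++
           mkseq (interleave (fun m => x (J.+1 + m)%N) (fun m => y (J.+1 + m)%N)) i.*2.+2).
      move=> i Hi; have Hi' : (J.+1 + i < k)%N by rewrite Ek ltn_add2l.
      have [h1 h2] := HY _ Hi'.
      split => //; move: h2; by rewrite doubleD -!addnS pos_shift2.
    have [a [b c]] := G2 _ HZ' HY'.
    move: a b c; rewrite -Ek => a b c; split => //; split => //.
    move: c; by rewrite -pos_shift2 addnS -doubleD -Ek.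
- move=> Hall.
  have Tqq := Tq (fun i _ => (Hall i).2).
  have [_ G3] := HG Tqq.
  rewrite (out_shift2 p x y J.+1); apply: G3 => i.
  have [h1 [h2 h3]] := Hall (J.+1 + i)%N; split => //; split => //.
  move: h3; by rewrite doubleD -!addnS pos_shift2.
Qed.

Lemma il_agree2 {F : countFieldType} (x x1 y y1 : nat -> {poly F}) K t :
  (forall i, (i < K)%N -> x i = x1 i /\ y i = y1 i) -> (t <= K.*2)%N ->
  mkseq (interleave x y) t = mkseq (interleave x1 y1) t.
Proof.
move=> H Ht; apply: mkseq_eqn => s Hs.
have Hs' : (s./2 < K)%N.
  rewrite -ltn_double; apply: leq_trans Ht; apply: leq_ltn_trans Hs.
  rewrite -{2}(odd_double_half s) leq_addl //.
rewrite /interleave; case: ifP => _; [exact: (H _ Hs').2 | exact: (H _ Hs').1].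
Qed.

Definition sb {F : countFieldType} (S : seq {poly F} -> Prop) (q : seq {poly F}) : bool :=
  if excluded_middle_informative (S q) then true else false.

Lemma sbP {F : countFieldType} (S : seq {poly F} -> Prop) q : sb S q = true <-> S q.
Proof. rewrite /sb; case: excluded_middle_informative => //. Qed.

Definition Hist {F : countFieldType} (Z : nat -> {poly F} -> Prop) (y : nat -> {poly F}) i :=
  [seq (y j, Z j.+1) | j <- iota 0 i].

Lemma Hist_size {F : countFieldType} Z (y : nat -> {poly F}) i : size (Hist Z y i) = i.
Proof. by rewrite /Hist size_map size_iota. Qed.

Lemma Hist_take {F : countFieldType} Z (y : nat -> {poly F}) i k :
  (k <= i)%N -> take k (Hist Z y i) = Hist Z y k.
Proof. by move=> H; rewrite /Hist -map_take take_iota (minn_idPl H). Qed.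

Lemma Hist_nth {F : countFieldType} Z (y : nat -> {poly F}) i k d :
  (k < i)%N -> nth d (Hist Z y i) k = (y k, Z k.+1).
Proof.
move=> H; rewrite /Hist (nth_map 0%N) ?size_iota // nth_iota //.
Qed.

Lemma Hist_drop {F : countFieldType} Z (y : nat -> {poly F}) i k :
  drop k (Hist Z y i) = Hist (fun m => Z (k + m)%N) (fun m => y (k + m)%N) (i - k).
Proof.
rewrite /Hist -map_drop drop_iota add0n -{1}[k]addn0 iotaDl -map_comp.
by apply: eq_map => m /=; rewrite addnS.
Qed.

Lemma Win_switch_even {F : countFieldType} A (S T : seq {poly F} -> Prop) W p :
  (forall q, S q -> T q) -> ~~ odd (size p) ->
  (forall q, ~~ odd (size q) -> T q -> ~ S q -> Win A T W q) ->
  Win A S W p -> Win A T W p.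
Proof.
move=> HST Hp Hexit; rewrite /Win /I_has_strategy (negbTE Hp) => -[s Hs].
pose rho q := epsilon inh_se (fun s => wins_even A T W q s).
have rhoP : forall q, ~~ odd (size q) -> T q -> ~ S q -> wins_even A T W q (rho q).
  move=> q Hq Tq Sq; apply: (epsilon_spec inh_se (fun s => wins_even A T W q s)).
  by have := Hexit q Hq Tq Sq; rewrite /Win /I_has_strategy (negbTE Hq).
pose tau : stratI_even F := fun Z0 h =>
  let xs k := (s Z0 (take k h)).1 in
  let ys k := (nth (0, Z0) h k).1 in
  let pos k := p ++ mkseq (interleave xs ys) k.*2 in
  let j := find (fun k => ~~ sb S (pos k.+1)) (iota 0 (size h)) in
  if (j < size h)%N then rho (pos j.+1) (nth (0, Z0) h j).2 (drop j.+1 h) else s Z0 h.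
exists tau; apply/wins_evenE => Z y.
pose xs k := (mvE s Z y k).1.
pose Ps k := p ++ mkseq (interleave xs y) k.*2.
pose exb k := ~~ sb S (Ps k.+1).
have Etau : forall i, mvE tau Z y i =
   if (find exb (iota 0 i) < i)%N then mvE (rho (Ps (find exb (iota 0 i)).+1))
      (fun m => Z ((find exb (iota 0 i)).+1 + m)%N) (fun m => y ((find exb (iota 0 i)).+1 + m)%N)
      (i - (find exb (iota 0 i)).+1)
   else mvE s Z y i.
  move=> i; rewrite /mvE /tau; fold (Hist Z y i); rewrite Hist_size.
  have Hpos : forall k, (k <= i)%N ->
     p ++ mkseq (interleave (fun k0 => (s (Z 0%N) (take k0 (Hist Z y i))).1)
                            (fun k0 => (nth (0, Z 0%N) (Hist Z y i) k0).1)) k.*2 = Ps k.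
    move=> k Hk; rewrite /Ps; congr (_ ++ _); apply: (il_agree2 (K:=k)) => // m Hm.
    rewrite Hist_take ?Hist_nth //; [exact: leq_trans Hm Hk | exact: ltnW (leq_trans Hm Hk)].
  have -> : find (fun k => ~~ sb S (p ++ mkseq (interleave (fun k0 => (s (Z 0%N) (take k0 (Hist Z y i))).1)
                            (fun k0 => (nth (0, Z 0%N) (Hist Z y i) k0).1)) k.+1.*2)) (iota 0 i) =
            find exb (iota 0 i).
    apply: eq_in_find => k; rewrite mem_iota add0n /= => Hk; by rewrite /exb Hpos.
  case: ifP => Hj //.
  rewrite Hpos // Hist_nth // Hist_drop /=.
  by rewrite addn0.
move: Hs; rewrite wins_evenE => Hs.
have exbS : forall k, ~~ exb k -> S (Ps k.+1).
  by move=> k; rewrite /exb negbK => /sbP.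
case: (classic (exists k, exb k)) => [Hex | Hno]; last first.
  have E : forall i, mvE tau Z y i = mvE s Z y i.
    move=> i; rewrite Etau find_iota_none ?ltnn // => k _.
    by apply/negP => h; apply: Hno; exists k.
  have -> : (fun i => (mvE tau Z y i).1) = xs by apply: functional_extensionality => i; rewrite E.
  have -> : (fun i => (mvE tau Z y i).2) = (fun i => (mvE s Z y i).2).
    by apply: functional_extensionality => i; rewrite E.
  apply: (Geven_ST HST) (Hs Z y) => i; rewrite -doubleS; apply: exbS.
  by apply/negP => h; apply: Hno; exists i.
case: (ex_minnP Hex) => J HJ HJmin.
have Hlow : forall i, (i <= J)%N -> mvE tau Z y i = mvE s Z y i.
  move=> i Hi; rewrite Etau find_iota_none ?ltnn // => k Hk.
  apply/negP => h; have := HJmin k h; rewrite leqNgt; move/negP; apply; exact: leq_trans Hk Hi.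
have Hhigh : forall m, mvE tau Z y (J.+1 + m) =
    mvE (rho (Ps J.+1)) (fun m => Z (J.+1 + m)%N) (fun m => y (J.+1 + m)%N) m.
  move=> m; rewrite Etau (find_iota_J (J:=J)) //.
  - by rewrite ltnS leq_addr addKn.
  - by rewrite ltnS leq_addr.
  - move=> k Hk; apply/negP => h; have := HJmin k h; by rewrite leqNgt Hk.
have Hag : forall i, (i <= J)%N -> (mvE tau Z y i).1 = xs i /\ (mvE tau Z y i).2 = (mvE s Z y i).2.
  by move=> i Hi; rewrite Hlow.
apply: (Geven_splice (S:=S) (x1 := xs) (n1 := fun i => (mvE s Z y i).2) (J:=J) HST Hag) (Hs Z y) _.
  move=> i Hi; rewrite -doubleS; apply: exbS; apply/negP => h.
  by have := HJmin i h; rewrite leqNgt Hi.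
have Eq : p ++ mkseq (interleave (fun i => (mvE tau Z y i).1) y) (J.+1).*2 = Ps J.+1.
  rewrite /Ps; congr (_ ++ _); apply: (il_agree2 (K:=J.+1)) => // i Hi.
  by split => //; rewrite Hlow.
rewrite Eq => Tq.
have Hw := rhoP (Ps J.+1) _ Tq _.
have -> : (fun m => (mvE tau Z y (J.+1 + m)%N).1) =
   (fun m => (mvE (rho (Ps J.+1)) (fun m => Z (J.+1 + m)%N) (fun m => y (J.+1 + m)%N) m).1).
  by apply: functional_extensionality => m; rewrite Hhigh.
have -> : (fun m => (mvE tau Z y (J.+1 + m)%N).2) =
   (fun m => (mvE (rho (Ps J.+1)) (fun m => Z (J.+1 + m)%N) (fun m => y (J.+1 + m)%N) m).2).
  by apply: functional_extensionality => m; rewrite Hhigh.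
move: Hw; rewrite wins_evenE; apply.
  by rewrite /Ps size_pos.
by move: HJ; rewrite /exb => /negP Hn HS; apply: Hn; apply/sbP.
Qed.

Lemma Win_legal {F : countFieldType} A T (V W : {poly F} -> Prop) v0 p :
  is_rule V v0 T -> subset_of W V -> T p -> (forall u, A (outcome p u)) -> Win A T W p.
Proof.
move=> HT HWV Tp HA; case: (boolP (odd (size p))) => Hp; last exact: Win_legal_even HT HWV Hp Tp HA.
apply: Win_odd_step => //; exists 0%N => z _ Tz.
apply: Win_legal_even HT HWV _ Tz _; first by rewrite size_rcons /= Hp.
move=> u; have := HA (fun t => if t is t'.+1 then u t' else z).
rewrite outcome_shift1 /=.
have -> : (fun i => u i) = u by apply: functional_extensionality.
done.
Qed.

Theorem mainTheorem7 (F : countFieldType)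
    (A : (nat -> {poly F}) -> Prop) (V : {poly F} -> Prop)
    (v : seq {poly F}) (T : seq {poly F} -> Prop) :
  block_subspace V -> block_fin v -> is_rule V v T ->
  (forall W, block_subspace W -> subset_of W V -> ~ I_has_strategy A T W v) ->
  exists (X : {poly F} -> Prop) (S : seq {poly F} -> Prop),
    block_subspace X /\ subset_of X V /\ is_rule X v S /\
    (forall y, S y -> T y) /\
    (forall x, body S x -> ~ interior A x) /\
    (forall W, block_subspace W -> subset_of W X -> ~ I_has_strategy A S W v).
Proof.
move=> HV Hv HT Hno.
pose P1 (k : nat) (Y : {poly F} -> Prop) :=
  match @unpickle (seq {poly F}) k with
  | Some q => Win A T Y q \/ (forall W, block_subspace W -> subset_of W Y -> ~ Win A T W q)
  | None => True end.
have [X0 [HX0b [HX0V HX0P]]] : exists X, block_subspace X /\ subset_of X V /\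
    forall k, exists Y N, P1 k Y /\ forall x, X x -> beyond N x -> Y x.
  apply: diag => // k Y HY HYV; rewrite /P1.
  case: (unpickle k) => [q|]; last by exists Y; split => //; split => //.
  case: (classic (exists W, block_subspace W /\ subset_of W Y /\ Win A T W q)) => [[W [h1 [h2 h3]]]|H].
    by exists W; split => //; split => //; left.
  exists Y; split => //; split => //; right => W h1 h2 h3; apply: H; by exists W.
have U : forall q W, block_subspace W -> subset_of W X0 -> (Win A T W q <-> Win A T X0 q).
  move=> q W HW HWX.
  have [Y [N [HP HY]]] := HX0P (pickle q); move: HP; rewrite /P1 pickleK.
  have sub : forall W', subset_of W' X0 -> subset_of (cW W' N) Y.
    by move=> W' HW' x [h1 h2]; apply: HY => //; apply: HW'.
  case=> [HwY|HnY].
    have all : forall W', block_subspace W' -> subset_of W' X0 -> Win A T W' q.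
      move=> W' _ HW'; apply: (Win_tail (N:=N)); exact: Win_mono (sub _ HW') HwY.
    by split => _; apply: all.
  have none : forall W', block_subspace W' -> subset_of W' X0 -> ~ Win A T W' q.
    move=> W' HW'b HW' Hw; apply: (HnY (cW W' N) (cW_block N HW'b) (sub _ HW')).
    by apply: Win_mono Hw => x [].
  split => Hw; [by case: (none W) | by case: (none X0)].
pose P2 (k : nat) (Y : {poly F} -> Prop) :=
  match @unpickle (seq {poly F}) k with
  | Some q => (T q /\ ~~ odd (size q) /\ ~ Win A T X0 q) ->
      forall x, Y x -> x != 0 -> T (rcons q x) -> ~ Win A T X0 (rcons q x)
  | None => True end.
have [X [HXb [HXX0 HXP]]] : exists X, block_subspace X /\ subset_of X X0 /\
    forall k, exists Y N, P2 k Y /\ forall x, X x -> beyond N x -> Y x.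
  apply: diag => // k Y HY HYX; rewrite /P2.
  case: (unpickle k) => [q|]; last by exists Y; split => //; split => //.
  case: (classic (T q /\ ~~ odd (size q) /\ ~ Win A T X0 q)) => [[Tq [Hq Hw]]|H]; last first.
    by exists Y; split => //; split => //.
  have HwY : ~ Win A T Y q by rewrite (U q Y HY HYX).
  case: (classic (exists Z, block_subspace Z /\ subset_of Z Y /\
     forall x, Z x -> x != 0 -> T (rcons q x) -> ~ Win A T Y (rcons q x))) => [[Z [h1 [h2 h3]]]|H].
    exists Z; split => //; split => // _ x Zx nz Tx.
    by rewrite -(U _ Y HY HYX); apply: h3.
  exfalso; apply: HwY; apply: Win_even_step => // Z HZ HZY.
  apply: NNPP => Hn; apply: H; exists Z; split => //; split => // x Zx nz Tx Hw'.
  by apply: Hn; exists x.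
have HXV : subset_of X V by move=> x Hx; apply: HX0V; apply: HXX0.
pose S q := T q /\ ~ Win A T X0 q.
have [Tv [Tfin [Todd Teven]]] := HT.
exists X, S; split => //; split => //; split; [|split; [by move=> y [] | split]].
-
  split; first by split => //; apply: Hno.
  split; first by move=> y [Ty _]; apply: Tfin.
  split.
  + move=> y [Ty Hy] Hodd Z HZ HZX.
    have HZX0 : subset_of Z X0 by move=> x Hx; apply: HXX0; apply: HZX.
    have HwZ : ~ Win A T Z y by rewrite (U y Z HZ HZX0).
    apply: NNPP => Hn; apply: HwZ; apply: Win_odd_step => //; exists 0%N => z Hz Tz.
    apply: NNPP => Hw; apply: Hn; exists z; split; first by case: Hz.
    by split => //; rewrite -(U _ Z HZ HZX0).
  + move=> y [Ty Hy] Hev.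
    have [nT HnT] := Teven y Ty Hev.
    have [Y [N [HP HYN]]] := HXP (pickle y); move: HP; rewrite /P2 pickleK => HP.
    exists (maxn nT N) => z [Xz [nz Hb]].
    have Tz : T (rcons y z).
      apply: HnT; split; first exact: HXV.
      split => // i Hi; have := Hb i Hi; by rewrite gtn_max => /andP [].
    split => //; apply: (HP (conj Ty (conj Hev Hy))) => //.
    apply: HYN => // i Hi; have := Hb i Hi; by rewrite gtn_max => /andP [].
-
  move=> x Hbody [m Hm].
  have [m' [Hmm' [Tq Hq]]] := Hbody m.
  apply: Hq; apply: (Win_legal HT HX0V Tq) => u; apply: Hm => i Hi.
  have Him : (i < m'.+1)%N by rewrite ltnS (leq_trans (ltnW Hi) Hmm').
  by rewrite /outcome size_mkseq Him nth_mkseq.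
-
  move=> W HW HWX HwS.
  have HWX0 : subset_of W X0 by move=> x Hx; apply: HXX0; apply: HWX.
  have HWV : subset_of W V by move=> x Hx; apply: HX0V; apply: HWX0.
  have Hexit : forall q, ~~ odd (size q) -> T q -> ~ S q -> Win A T W q.
    move=> q _ Tq Sq; rewrite (U q W HW HWX0); apply: NNPP => Hw; apply: Sq; by split.
  have HST : forall q, S q -> T q by move=> q [].
  apply: (Hno W HW HWV); rewrite -/(Win A T W v).
  case: (boolP (odd (size v))) => Hp; last exact: (Win_switch_even HST Hp Hexit HwS).
  have [n Hn] := Win_odd_res Hp HwS.
  apply: Win_odd_step => //; exists n => z Hz Tz.
  have Hev : ~~ odd (size (rcons v z)) by rewrite size_rcons /= Hp.
  case: (classic (S (rcons v z))) => HSz; last exact: Hexit.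
  exact: (Win_switch_even HST Hev Hexit (Hn z Hz HSz)).
Qed.
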